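(* Let $G$ act 3-discontinuously and 2-cocompactly on a compactum $T$ and let $A$ be as in the context. Let $B\subset A$ be infinite, $d\ge 1$ an integer, and $C=N_d(B)$ the set of vertices of $\Gamma_A$ at $\Gamma_A$-distance at most $d$ from $B$. Then a point of $T$ is an accumulation point of $C$ if and only if it is an accumulation point of $B$. In particular, if $(\mathbf b_n)$, $(\mathbf c_n)$ are sequences in $A$ with $d_A(\mathbf b_n,\mathbf c_n)$ uniformly bounded, then $\mathbf b_n\to p\in T$ if and only if $\mathbf c_n\to p$.
   Context: A compactum is a compact Hausdorff space ($\ge3$ points); 3-discontinuous: the induced action on 3-element subsets of $T$ is properly discontinuous; 2-cocompact: the induced action on 2-element subsets is cocompact. An entourage is a neighborhood of the diagonal in the space $S^2T$ of unordered pairs of points of $T$; a set $U\subset T$ is $\mathbf e$-small if $\{x,y\}\in\mathbf e$ for all $x,y\in U$. Entourages $\mathbf a,\mathbf b$ are unlinked if $T=a\cup b$ with $a$ $\mathbf a$-small and $b$ $\mathbf b$-small, linked ($\mathbf a\#\mathbf b$) otherwise. Here $A=G\mathbf a_0$ is the $G$-orbit of an entourage $\mathbf a_0$ linked with itself (so $A$ is discrete: each entourage is linked with only finitely many elements of $A$). $\Gamma_A$ is the graph with vertex set $A$ and edges $\{\mathbf a,\mathbf b\}$ with $\mathbf a\#\mathbf b$; $d_A$ is its graph distance (possibly $\infty$). A point $p\in T$ is an accumulation point of $B\subset A$ if for every open $o\ni p$ in $T$ there are infinitely many $\mathbf b\in B$ with $T\setminus o$ $\mathbf b$-small; $\mathbf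 b_n\to p$ means for every open $o\ni p$, $T\setminus o$ is $\mathbf b_n$-small for all large $n$. *)

(* Defs.v *)
From Stdlib Require Import List Classical.

Set Implicit Arguments.

Definition is_topology (X : Type) (op : (X -> Prop) -> Prop) : Prop :=
  op (fun _ => True) /\
  (forall U V, op U -> op V -> op (fun x => U x /\ V x)) /\
  (forall F : (X -> Prop) -> Prop, (forall U, F U -> op U) ->
     op (fun x => exists U, F U /\ U x)).

Definition compact_set (X : Type) (op : (X -> Prop) -> Prop) (K : X -> Prop) : Prop :=
  forall F : (X -> Prop) -> Prop,
    (forall U, F U -> op U) ->
    (forall x, K x -> exists U, F U /\ U x) ->
    exists l : list (X -> Prop),
      (forall U, In U l -> F U) /\ (forall x, K x -> exists U, In U l /\ U x).

Definition hausdorff (X : Type) (op : (X -> Prop) -> Prop) : Prop :=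
  forall x y, x <> y -> exists U V, op U /\ op V /\ U x /\ V y /\
    (forall z, U z -> V z -> False).

Definition prod_open (X Y : Type) (opX : (X -> Prop) -> Prop) (opY : (Y -> Prop) -> Prop)
  (W : X * Y -> Prop) : Prop :=
  forall p, W p -> exists a b, opX a /\ opY b /\ a (fst p) /\ b (snd p) /\
    (forall x y, a x -> b y -> W (x, y)).

Definition compactum (T : Type) (op : (T -> Prop) -> Prop) : Prop :=
  is_topology op /\ compact_set op (fun _ => True) /\ hausdorff op /\
  exists x y z : T, x <> y /\ y <> z /\ x <> z.

Definition finite_set (X : Type) (P : X -> Prop) : Prop :=
  exists l : list X, forall x, P x -> In x l.

Definition is_group (G : Type) (mul : G -> G -> G) (inv : G -> G) (one : G) : Prop :=
  (forall a b c, mul a (mul b c) = mul (mul a b) c) /\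
  (forall a, mul one a = a) /\ (forall a, mul a one = a) /\
  (forall a, mul (inv a) a = one) /\ (forall a, mul a (inv a) = one).

(* An action of G on the space T by homeomorphisms (continuous maps; the
   inverse of act g is act (inv g), hence also continuous). *)
Definition is_action (G T : Type) (mul : G -> G -> G) (one : G)
  (op : (T -> Prop) -> Prop) (act : G -> T -> T) : Prop :=
  (forall x, act one x = x) /\
  (forall g h x, act (mul g h) x = act g (act h x)) /\
  (forall g U, op U -> op (fun x => U (act g x))).

(* 3-discontinuous: the induced action on the space of 3-element subsets is
   properly discontinuous.  Subsets of Theta^3 T are represented by their
   preimages in the space of ordered triples of pairwise distinct points
   (with the product topology); compact sets of the quotient correspond to
   (saturations of) compact sets of ordered distinct triples. *)
Definition three_discontinuous (G T : Type) (op : (T -> Prop) -> Prop)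
  (act : G -> T -> T) : Prop :=
  forall K : T * T * T -> Prop,
    compact_set (prod_open (prod_open op op) op) K ->
    (forall x y z, K (x, y, z) -> x <> y /\ y <> z /\ x <> z) ->
    finite_set (fun g => exists x y z,
                   K (x, y, z) /\ K (act g x, act g y, act g z)).

(* 2-cocompact: there is a compact set K of 2-element subsets (represented by
   ordered pairs of distinct points) whose G-translates cover all 2-element
   subsets. *)
Definition two_cocompact (G T : Type) (op : (T -> Prop) -> Prop)
  (act : G -> T -> T) : Prop :=
  exists K : T * T -> Prop,
    compact_set (prod_open op op) K /\
    (forall x y, K (x, y) -> x <> y) /\
    (forall x y, x <> y -> exists g, K (act g x, act g y)).

(* A subset of S^2 T (unordered pairs, diagonal included) is represented as a
   symmetric relation on T.  Open sets of S^2 T correspond to symmetric open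
   subsets of T * T. *)
Definition entourage (T : Type) (op : (T -> Prop) -> Prop) (e : T -> T -> Prop) : Prop :=
  (forall x y, e x y -> e y x) /\
  exists W : T * T -> Prop,
    prod_open op op W /\
    (forall x y, W (x, y) -> W (y, x)) /\
    (forall x, W (x, x)) /\
    (forall x y, W (x, y) -> e x y).

Definition small (T : Type) (e : T -> T -> Prop) (U : T -> Prop) : Prop :=
  forall x y, U x -> U y -> e x y.

Definition linked (T : Type) (a b : T -> T -> Prop) : Prop :=
  ~ exists (u v : T -> Prop),
      (forall x, u x \/ v x) /\ small a u /\ small b v.

(* g . e = { {g x, g y} : {x, y} in e } *)
Definition ent_act (G T : Type) (inv : G -> G) (act : G -> T -> T)
  (g : G) (e : T -> T -> Prop) : T -> T -> Prop :=
  fun x y => e (act (inv g) x) (act (inv g) y).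

(* The graph Gamma_A: within A n a c  <->  d_A(a, c) <= n
   (a walk of length at most n in Gamma_A from a to c with vertices in A). *)
Fixpoint within (T : Type) (A : (T -> T -> Prop) -> Prop) (n : nat)
  (a c : T -> T -> Prop) : Prop :=
  match n with
  | O => a = c
  | S m => a = c \/ exists b, A b /\ linked a b /\ within A m b c
  end.

Definition nbhd (T : Type) (A B : (T -> T -> Prop) -> Prop) (d : nat)
  (c : T -> T -> Prop) : Prop :=
  A c /\ exists b, B b /\ within A d b c.

Definition acc_point (T : Type) (op : (T -> Prop) -> Prop)
  (B : (T -> T -> Prop) -> Prop) (p : T) : Prop :=
  forall o, op o -> o p ->
    ~ finite_set (fun b => B b /\ small b (fun x => ~ o x)).

Definition conv_to (T : Type) (op : (T -> Prop) -> Prop)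
  (b : nat -> (T -> T -> Prop)) (p : T) : Prop :=
  forall o, op o -> o p ->
    exists N, forall n, N <= n -> small (b n) (fun x => ~ o x).

(* Main.v *)
Require Import Defs.
From Stdlib Require Import List Classical.

Lemma fin_sub {X} (P Q : X -> Prop) : finite_set Q -> (forall x, P x -> Q x) -> finite_set P.
Proof. intros [l Hl] H. exists l. intros x Px. apply Hl, H, Px. Qed.

Lemma fin_union {X} (P Q : X -> Prop) : finite_set P -> finite_set Q ->
  finite_set (fun x => P x \/ Q x).
Proof. intros [l1 H1] [l2 H2]. exists (l1 ++ l2). intros x [Px|Qx]; apply in_or_app; auto. Qed.

Lemma fin_list {X} (l : list X) : finite_set (fun x => In x l).
Proof. exists l; auto. Qed.

Lemma fin_big {X Y} (l : list Y) (P : Y -> X -> Prop) :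
  (forall y, In y l -> finite_set (P y)) -> finite_set (fun x => exists y, In y l /\ P y x).
Proof.
  induction l as [|y l IH]; intros H.
  - exists nil. intros x [y [[] _]].
  - destruct (H y (or_introl eq_refl)) as [l1 H1].
    destruct IH as [l2 H2]. { intros y' Hy'. apply H. right; auto. }
    exists (l1 ++ l2). intros x [y' [[<-|Hin] Pyx]]; apply in_or_app.
    + left; auto.
    + right; apply H2; eauto.
Qed.

Lemma fin_map {X Y} (f : Y -> X) (P : Y -> Prop) : finite_set P ->
  finite_set (fun x => exists y, P y /\ x = f y).
Proof. intros [l Hl]. exists (map f l). intros x [y [Py ->]]. apply in_map; auto. Qed.

Lemma pigeon {X} (P : nat -> Prop) (c : nat -> X) (l : list X) :
  (forall N, exists n, N <= n /\ P n) -> (forall n, P n -> In (c n) l) ->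
  exists e, In e l /\ forall N, exists n, N <= n /\ P n /\ c n = e.
Proof.
  revert P. induction l as [|e l IH]; intros P HP Hc.
  - destruct (HP 0) as [n [_ Pn]]. destruct (Hc n Pn).
  - destruct (classic (forall N, exists n, N <= n /\ P n /\ c n = e)) as [H|H].
    + exists e; split; auto. left; auto.
    + apply not_all_ex_not in H. destruct H as [N0 HN0].
      destruct (IH (fun n => N0 <= n /\ P n)) as [e' [He' Hall]].
      * intros N. destruct (HP (N + N0)) as [n [Hn Pn]]. exists n.
        split; [|split; auto].
        ++ apply (PeanoNat.Nat.le_trans _ (N+N0)); auto. apply PeanoNat.Nat.le_add_r.
        ++ apply (PeanoNat.Nat.le_trans _ (N+N0)); auto. apply PeanoNat.Nat.le_add_l.
      * intros n [Hn Pn]. destruct (Hc n Pn) as [Heq|Hin]; auto.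
        exfalso. apply HN0. exists n. auto.
      * exists e'. split; [right; auto|]. intros N. destruct (Hall N) as [n [Hn [[_ Pn] Hcn]]].
        eauto.
Qed.

Lemma op_full {T} (op : (T -> Prop) -> Prop) : is_topology op -> op (fun _ => True).
Proof. intros [H _]; exact H. Qed.
Lemma op_inter {T} (op : (T -> Prop) -> Prop) : is_topology op -> forall U V, op U -> op V -> op (fun x => U x /\ V x).
Proof. intros [_ [H _]]; exact H. Qed.
Lemma op_fam {T} (op : (T -> Prop) -> Prop) : is_topology op -> forall F : (T -> Prop) -> Prop,
  (forall U, F U -> op U) -> op (fun x => exists U, F U /\ U x).
Proof. intros [_ [_ H]]; exact H. Qed.


Lemma regular {T} (op : (T -> Prop) -> Prop) : is_topology op -> compact_set op (fun _ => True) ->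
  hausdorff op -> forall o p, op o -> o p ->
  exists n m, op n /\ op m /\ n p /\ (forall x, n x -> m x -> False) /\ (forall x, ~ o x -> m x).
Proof.
  intros htop hc hh o p ho hp.
  set (F := fun V => op V /\ (V = o \/ exists U, op U /\ U p /\ forall z, U z -> V z -> False)).
  destruct (hc F) as [l [Hl Hcov]].
  - intros U [HU _]; exact HU.
  - intros x _. destruct (classic (o x)) as [Hx|Hx].
    + exists o. split; auto. split; auto.
    + assert (p <> x) by (intro; subst; auto).
      destruct (hh p x H) as [U [V [HU [HV [Up [Vx Hd]]]]]].
      exists V. split; auto. split; auto. right. exists U; auto.
  - assert (Hn : forall l', (forall V, In V l' -> F V) -> exists n, op n /\ n p /\
       forall V, In V l' -> V = o \/ (forall z, n z -> V z -> False)).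
    { induction l' as [|V l' IH]; intros HF.
      - exists (fun _ => True). split; [apply op_full; auto|]. split; [exact I|intros V []].
      - destruct IH as [n [Hn [np Hn']]]. { intros; apply HF; right; auto. }
        destruct (HF V (or_introl eq_refl)) as [HV [Ho|[U [HU [Up Hd]]]]].
        + exists n. split; auto. split; auto. intros V' [<-|Hin]; auto.
        + exists (fun x => U x /\ n x). split; [apply op_inter; auto|]. split; auto.
          intros V' [<-|Hin].
          * right. intros z [Uz _] Vz. eauto.
          * destruct (Hn' V' Hin) as [|Hd']; auto. right. intros z [_ nz] Vz. eauto. }
    destruct (Hn l Hl) as [n [Hnop [np Hnl]]].
    exists n, (fun x => exists V, (In V l /\ op V /\ forall z, n z -> V z -> False) /\ V x).
    split; auto. split.
    + apply op_fam; auto. intros U [_ [H _]]; auto.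
    + split; auto. split.
      * intros x nx [V [[_ [_ Hd]] Vx]]. eauto.
      * intros x Hx. destruct (Hcov x I) as [V [Hin Vx]].
        exists V. split; [|exact Vx]. split; [exact Hin|]. split; [apply (Hl V Hin)|].
        destruct (Hnl V Hin) as [->|Hd]; auto; contradiction.
Qed.

Lemma po_box {X Y} (opX : (X -> Prop) -> Prop) (opY : (Y -> Prop) -> Prop) a b :
  opX a -> opY b -> prod_open opX opY (fun p => a (fst p) /\ b (snd p)).
Proof. intros Ha Hb p [H1 H2]. exists a, b. repeat split; auto. Qed.

Lemma po_union {X Y} (opX : (X -> Prop) -> Prop) (opY : (Y -> Prop) -> Prop) W1 W2 :
  prod_open opX opY W1 -> prod_open opX opY W2 -> prod_open opX opY (fun p => W1 p \/ W2 p).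
Proof.
  intros H1 H2 p [Hp|Hp].
  - destruct (H1 p Hp) as [a [b [? [? [? [? Hab]]]]]]. exists a, b. repeat split; auto.
  - destruct (H2 p Hp) as [a [b [? [? [? [? Hab]]]]]]. exists a, b. repeat split; auto.
Qed.

Lemma po_inter {X Y} (opX : (X -> Prop) -> Prop) (opY : (Y -> Prop) -> Prop) W1 W2 :
  is_topology opX -> is_topology opY ->
  prod_open opX opY W1 -> prod_open opX opY W2 -> prod_open opX opY (fun p => W1 p /\ W2 p).
Proof.
  intros tX tY H1 H2 p [Hp1 Hp2].
  destruct (H1 p Hp1) as [a [b [? [? [? [? Hab]]]]]].
  destruct (H2 p Hp2) as [a' [b' [? [? [? [? Hab']]]]]].
  exists (fun x => a x /\ a' x), (fun y => b y /\ b' y).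
  split; [apply op_inter; auto|]. split; [apply op_inter; auto|].
  split; [split; auto|]. split; [split; auto|].
  intros x0 y0 [] []; auto.
Qed.

Lemma po_full {X Y} (opX : (X -> Prop) -> Prop) (opY : (Y -> Prop) -> Prop) :
  is_topology opX -> is_topology opY -> prod_open opX opY (fun _ => True).
Proof. intros tX tY p _. exists (fun _ => True), (fun _ => True). repeat split; auto; apply op_full; auto. Qed.

Lemma po_top {X Y} (opX : (X -> Prop) -> Prop) (opY : (Y -> Prop) -> Prop) :
  is_topology opX -> is_topology opY -> is_topology (prod_open opX opY).
Proof.
  intros tX tY. split; [apply po_full; auto|]. split.
  - intros; apply po_inter; auto.
  - intros F HF p [U [FU Up]]. destruct (HF U FU p Up) as [a [b [? [? [? [? Hab]]]]]].
    exists a, b. repeat split; auto. intros x y ax yb. exists U; auto.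
Qed.

Lemma prod_compact {X Y} (opX : (X -> Prop) -> Prop) (opY : (Y -> Prop) -> Prop) :
  is_topology opX -> is_topology opY ->
  compact_set opX (fun _ => True) -> compact_set opY (fun _ => True) ->
  compact_set (prod_open opX opY) (fun _ => True).
Proof.
  intros tX tY cX cY F HF Hcov.
  assert (Hslice : forall x, exists a, opX a /\ a x /\ exists lW, (forall W, In W lW -> F W) /\
            forall x' y, a x' -> exists W, In W lW /\ W (x', y)).
  { intros x.
    set (Fy := fun b => opY b /\ exists a W, opX a /\ a x /\ F W /\ forall x' y', a x' -> b y' -> W (x', y')).
    destruct (cY Fy) as [lb [Hlb Hcb]].
    - intros b [Hb _]; auto.
    - intros y _. destruct (Hcov (x, y) I) as [W [FW Wxy]].
      destruct (HF W FW (x,y) Wxy) as [a [b [Ha [Hb [ax [yb Hab]]]]]].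
      exists b. split; auto. split; auto. exists a, W. repeat split; auto.
    - assert (G : forall lb', (forall b, In b lb' -> Fy b) -> exists a, opX a /\ a x /\ exists lW,
          (forall W, In W lW -> F W) /\ forall x' y, a x' -> (exists b, In b lb' /\ b y) ->
          exists W, In W lW /\ W (x', y)).
      { induction lb' as [|b lb' IH]; intros Hb.
        - exists (fun _ => True). split; [apply op_full; auto|]. split; auto. exists nil.
          split; [intros _ []|]. intros x' y _ [b [[] _]].
        - destruct IH as [a [Ha [ax [lW [HlW Hc]]]]]. { intros; apply Hb; right; auto. }
          destruct (Hb b (or_introl eq_refl)) as [_ [a' [W [Ha' [a'x [FW HW]]]]]].
          exists (fun z => a z /\ a' z). split; [apply op_inter; auto|]. split; auto.
          exists (W :: lW). split.
          + intros W' [<-|Hin]; auto.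
          + intros x' y [az a'z] [b' [[<-|Hin] b'y]].
            * exists W. split; [left; auto|]. auto.
            * destruct (Hc x' y az) as [W' [HW' W'y]]; eauto. exists W'. split; [right|]; auto. }
      destruct (G lb Hlb) as [a [Ha [ax [lW [HlW Hc]]]]].
      exists a. split; auto. split; auto. exists lW. split; [exact HlW|].
      intros x' y az. apply Hc; [exact az|]. apply Hcb; exact I. }
  set (Fx := fun a => opX a /\ exists lW, (forall W, In W lW -> F W) /\
            forall x' y, a x' -> exists W, In W lW /\ W (x', y)).
  destruct (cX Fx) as [la [Hla Hca]].
  - intros a [Ha _]; auto.
  - intros x _. destruct (Hslice x) as [a [Ha [ax H]]]. exists a. split; auto. split; auto.
  - assert (G : forall la', (forall a, In a la' -> Fx a) -> exists lW, (forall W, In W lW -> F W) /\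
        forall x' y, (exists a, In a la' /\ a x') -> exists W, In W lW /\ W (x', y)).
    { induction la' as [|a la' IH]; intros Ha.
      - exists nil. split; [intros _ []|]. intros x' y [a [[] _]].
      - destruct IH as [lW [HlW Hc]]. { intros; apply Ha; right; auto. }
        destruct (Ha a (or_introl eq_refl)) as [_ [lW' [HlW' Hc']]].
        exists (lW' ++ lW). split.
        + intros W Hin. apply in_app_or in Hin. destruct Hin; auto.
        + intros x' y [a' [[<-|Hin] a'x]].
          * destruct (Hc' x' y a'x) as [W [? ?]]. exists W. split; auto. apply in_or_app; auto.
          * destruct (Hc x' y) as [W [? ?]]; eauto. exists W. split; auto. apply in_or_app; auto. }
    destruct (G la Hla) as [lW [HlW Hc]]. exists lW. split; auto.
    intros [x y] _. apply Hc. apply Hca; auto.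
Qed.

Lemma closed_compact {X} (op : (X -> Prop) -> Prop) (K : X -> Prop) :
  compact_set op (fun _ => True) ->
  (forall p, ~ K p -> exists U, op U /\ U p /\ forall q, U q -> ~ K q) ->
  compact_set op K.
Proof.
  intros hc hcl F HF Hcov.
  set (F' := fun U => F U \/ (op U /\ forall q, U q -> ~ K q)).
  destruct (hc F') as [l [Hl Hc]].
  - intros U [FU|[HU _]]; auto.
  - intros x _. destruct (classic (K x)) as [Kx|Kx].
    + destruct (Hcov x Kx) as [U [? ?]]. exists U. split; auto. left; auto.
    + destruct (hcl x Kx) as [U [? [? ?]]]. exists U. split; auto. right; auto.
  - assert (G : forall l', (forall U, In U l' -> F' U) -> exists l'', (forall U, In U l'' -> F U) /\
       forall x, K x -> (exists U, In U l' /\ U x) -> exists U, In U l'' /\ U x).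
    { induction l' as [|U l' IH]; intros H.
      - exists nil. split; [intros _ []|]. intros x _ [U [[] _]].
      - destruct IH as [l'' [H1 H2]]. { intros; apply H; right; auto. }
        destruct (H U (or_introl eq_refl)) as [FU|[_ HU]].
        + exists (U :: l''). split.
          * intros U' [<-|Hin]; auto.
          * intros x Kx [U' [[<-|Hin] U'x]]. { exists U. split; [left|]; auto. }
            destruct (H2 x Kx) as [U'' [? ?]]; eauto. exists U''. split; [right|]; auto.
        + exists l''. split; [exact H1|]. intros x Kx [U' [[<-|Hin] U'x]].
          * exfalso. apply (HU x); auto.
          * apply H2; eauto. }
    destruct (G l Hl) as [l'' [H1 H2]]. exists l''. split; [exact H1|].
    intros x Kx. apply H2; auto.
Qed.

Lemma halve {T} (op : (T -> Prop) -> Prop) : is_topology op -> compact_set op (fun _ => True) ->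
  hausdorff op -> forall V : T * T -> Prop, prod_open op op V -> (forall x, V (x, x)) ->
  exists W, prod_open op op W /\ (forall x, W (x, x)) /\ (forall x y, W (x, y) -> W (y, x)) /\
    (forall x y z, W (x, y) -> W (y, z) -> V (x, z)).
Proof.
  intros htop hc hh V HV Hd.
  set (F := fun U => op U /\ exists c m, op c /\ op m /\ (forall y z, c y -> c z -> V (y, z)) /\
          (forall x, U x -> m x -> False) /\ (forall x, ~ c x -> m x)).
  destruct (hc F) as [l [Hl Hcov]].
  - intros U [HU _]; auto.
  - intros x _. destruct (HV (x, x) (Hd x)) as [a [b [Ha [Hb [ax [bx Hab]]]]]].
    simpl in *.
    destruct (regular op htop hc hh (fun z => a z /\ b z) x) as [n [m [Hn [Hm [nx [Hnm Hcm]]]]]];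
      [apply op_inter; auto | split; auto |].
    exists n. split; auto. split; auto. exists (fun z => a z /\ b z), m.
    split; [apply op_inter; auto|]. split; auto. split.
    + intros y z [ay _] [_ bz]. apply Hab; auto.
    + split; auto.
  - assert (G : forall l', (forall U, In U l' -> F U) -> exists W, prod_open op op W /\
        (forall x, W (x, x)) /\ (forall x y, W (x, y) -> W (y, x)) /\
        forall y, (exists U, In U l' /\ U y) -> exists c, (forall y z, c y -> c z -> V (y, z)) /\
           forall x, W (x, y) -> c x).
    { induction l' as [|U l' IH]; intros HF.
      - exists (fun _ => True). split; [apply po_full; auto|]. split; [auto|]. split; [auto|].
        intros y [U [[] _]].
      - destruct IH as [W [HW [Wr [Ws Wc]]]]. { intros; apply HF; right; auto. }
        destruct (HF U (or_introl eq_refl)) as [HU [c [m [Hc [Hm [HcV [HUm Hcm]]]]]]].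
        exists (fun p => W p /\ ((c (fst p) /\ c (snd p)) \/ (m (fst p) /\ m (snd p)))).
        split.
        + apply po_inter; auto. apply po_union; apply po_box; auto.
        + split.
          * intros x. split; auto. simpl. destruct (classic (c x)); [left|right]; auto.
          * split.
            -- intros x y [Wxy [[? ?]|[? ?]]]; split; auto.
            -- intros y [U' [[<-|Hin] Uy]].
               ++ exists c. split; auto. intros x [_ [[cx _]|[_ my]]]; auto.
                  exfalso; eauto.
               ++ destruct (Wc y) as [c' [Hc' Hc'']]; eauto. exists c'. split; auto.
                  intros x [Wxy _]; auto. }
    destruct (G l Hl) as [W [HW [Wr [Ws Wc]]]].
    exists W. split; auto. split; auto. split; auto.
    intros x y z Wxy Wyz. destruct (Wc y) as [c [Hc Hcx]]; [apply Hcov; exact I|].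
    apply Hc; [apply Hcx; exact Wxy| apply Hcx; apply Ws; exact Wyz].
Qed.

Lemma claimC (T : Type) (f : T -> T) (t t2 t4 a u : T -> T -> Prop)
  (fsurj : forall y, exists x, f x = y)
  (ts : forall x y, t x y -> t y x) (t2s : forall x y, t2 x y -> t2 y x)
  (t4s : forall x y, t4 x y -> t4 y x)
  (tr : forall x, t x x) (t2r : forall x, t2 x x) (t4r : forall x, t4 x x)
  (c1 : forall x y z, t x y -> t y z -> t2 x z)
  (c2 : forall x y z, t2 x y -> t2 y z -> t4 x z)
  (c3 : forall x y z, t4 x y -> t4 y z -> a x z)
  (t4u : forall x y, t4 x y -> u x y)
  (hl : linked a a)
  (N : forall x y z, ~ t x y -> ~ t y z -> ~ t x z ->
        ~ t (f x) (f y) -> ~ t (f y) (f z) -> ~ t (f x) (f z) -> False) :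
  exists s, small u s /\ forall x y, ~ s x -> ~ s y -> a (f x) (f y).
Proof.
  assert (t_t2 : forall x y, t x y -> t2 x y) by (intros; eapply c1; eauto).
  assert (t2_t4 : forall x y, t2 x y -> t4 x y) by (intros; eapply c2; eauto).
  assert (t4_a : forall x y, t4 x y -> a x y) by (intros; eapply c3; eauto).
  assert (ch2 : forall x y z, t x y -> t y z -> t4 x z) by (intros; apply t2_t4; eauto).
  assert (ch3 : forall x y z w, t x y -> t y z -> t z w -> t4 x w)
    by (intros; eapply c2; [eapply c1; eauto| apply t_t2; eauto]).
  assert (ch4 : forall x y z w v, t x y -> t y z -> t z w -> t w v -> t4 x v)
    by (intros; eapply c2; eapply c1; eauto).
  assert (nocov : forall s1 s2 : T -> Prop, small a s1 -> small a s2 -> exists x, ~ s1 x /\ ~ s2 x).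
  { intros s1 s2 H1 H2. apply NNPP. intro H. apply hl. exists s1, s2. split; auto.
    intros x. apply NNPP. intro H'. apply H. exists x. split; intro; apply H'; auto. }
  assert (b4 : forall x, small a (fun y => t4 x y)) by (intros x y z H1 H2; eauto).
  assert (b2 : forall x, small a (fun y => t2 x y)) by (intros x y z H1 H2; apply t4_a; eauto).
  assert (BV : forall p1 q1 p2 q2 z,
    ~ t2 (f p1) (f q1) -> ~ t2 (f p2) (f q2) ->
    ~ t p1 p2 -> ~ t p1 q2 -> ~ t q1 p2 -> ~ t q1 q2 ->
    ~ t z p1 -> ~ t z q1 -> ~ t z p2 -> ~ t z q2 ->
    ~ t (f z) (f p1) -> ~ t (f z) (f q1) -> False).
  { intros p1 q1 p2 q2 z F1 F2 x11 x12 x21 x22 z1 z2 z3 z4 v1 v2.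
    assert (Hc2 : forall c, ~ t p1 c -> ~ t q1 c -> ~ t z c -> ~ t (f z) (f c) -> False).
    { intros c h1 h2 h3 h4.
      assert (E1 : t (f p1) (f c)).
      { apply NNPP; intro E. apply (N p1 c z); auto. }
      assert (E2 : t (f q1) (f c)).
      { apply NNPP; intro E. apply (N q1 c z); auto. }
      apply F1. apply (c1 _ (f c)); auto. }
    destruct (classic (t (f z) (f p2))) as [H1|H1]; [|apply (Hc2 p2); auto].
    destruct (classic (t (f z) (f q2))) as [H2|H2]; [|apply (Hc2 q2); auto].
    apply F2. apply (c1 _ (f z)); auto. }
  set (Q := fun x => exists y, t x y /\ ~ t2 (f x) (f y)).
  exists Q. split.
  -
    intros x1 x2 [y1 [T1 F1]] [y2 [T2 F2]]. apply t4u. apply NNPP. intro Hfar.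
    destruct (nocov _ _ (b4 x1) (b4 x2)) as [z [z1 z2]].
    assert (MAIN : forall i1 v1 i2 v2, t x1 i1 -> t x1 v1 -> t x2 i2 -> t x2 v2 ->
       ~ t2 (f i1) (f v1) -> ~ t2 (f i2) (f v2) ->
       t (f z) (f i1) -> t (f z) (f i2) -> ~ t (f z) (f v1) -> ~ t (f z) (f v2) -> False).
    { intros i1 v1 i2 v2 a1 a2 a3 a4 G1 G2 e1 e2 e3 e4.
      assert (cross : forall c d, t x1 c -> t x2 d -> ~ t c d).
      { intros c d h1 h2 h3. apply Hfar. apply (ch3 x1 c d x2); auto. }
      assert (zf1 : forall c, t x1 c -> ~ t z c).
      { intros c h1 h2. apply z1. apply (ch3 x1 c c z); auto. }
      assert (zf2 : forall c, t x2 c -> ~ t z c).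
      { intros c h1 h2. apply z2. apply (ch3 x2 c c z); auto. }
      assert (Ev : t (f v1) (f v2)).
      { apply NNPP; intro E. apply (N v1 v2 z); auto.
        - intro; eapply zf2; eauto.
        - intro; eapply zf1; eauto. }
      destruct (nocov _ _ (b2 (f i1)) (b2 (f v1))) as [W [W1 W2]].
      destruct (fsurj W) as [w Hw]. subst W.
      destruct (classic (t w i1 \/ t w v1)) as [Hc1|Hc1].
      +
        assert (Hc : exists c, t x1 c /\ t c w) by (destruct Hc1; eauto).
        destruct Hc as [c [h1 h2]].
        apply (N w v2 z).
        * intro h. apply Hfar. apply (ch4 x1 c w v2 x2); auto.
        * intro; eapply zf2; eauto.
        * intro h. apply z1. apply (ch3 x1 c w z); auto.
        * intro h. apply W2. apply t2s. apply (c1 _ (f v2)); auto.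
        * intro; apply e4; auto.
        * intro h. apply W1. apply t2s. apply (c1 _ (f z)); auto.
      + destruct (classic (t w i2 \/ t w v2)) as [Hc2|Hc2].
        * assert (Hc : exists c, t x2 c /\ t c w) by (destruct Hc2; eauto).
          destruct Hc as [c [h1 h2]].
          apply (N w v1 z).
          -- intro h. apply Hfar. apply t4s. apply (ch4 x2 c w v1 x1); auto.
          -- intro; eapply zf1; eauto.
          -- intro h. apply z2. apply (ch3 x2 c w z); auto.
          -- intro h. apply W2. apply t2s. apply t_t2; auto.
          -- intro; apply e3; auto.
          -- intro h. apply W1. apply t2s. apply (c1 _ (f z)); auto.
        * apply (BV i1 v1 i2 v2 w); auto;
          first [ intro h; eapply cross; [| |exact h]; auto; fail
                | intro; apply Hc1; auto; fail | intro; apply Hc2; auto; fail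
                | intro h; apply W1; apply t2s; apply t_t2; apply ts; auto; fail
                | intro h; apply W2; apply t2s; apply t_t2; apply ts; auto; fail ]. }
    assert (F1' : ~ t2 (f y1) (f x1)) by (intro; apply F1; auto).
    assert (F2' : ~ t2 (f y2) (f x2)) by (intro; apply F2; auto).
    assert (z1' : forall c, t x1 c -> ~ t z c).
    { intros c h1 h2. apply z1. apply (ch3 x1 c c z); auto. }
    assert (z2' : forall c, t x2 c -> ~ t z c).
    { intros c h1 h2. apply z2. apply (ch3 x2 c c z); auto. }
    assert (cr : forall c d, t x1 c -> t x2 d -> ~ t c d).
    { intros c d h1 h2 h3. apply Hfar. apply (ch3 x1 c d x2); auto. }
    assert (V1 : (t (f z) (f x1) /\ ~ t (f z) (f y1)) \/ (t (f z) (f y1) /\ ~ t (f z) (f x1))).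
    { destruct (classic (t (f z) (f x1))) as [A1|A1]; destruct (classic (t (f z) (f y1))) as [B1|B1].
      - exfalso. apply F1. apply (c1 _ (f z)); auto.
      - left; auto.
      - right; auto.
      - exfalso. apply (BV x1 y1 x2 y2 z); auto.
        all: first [ intro h; eapply cr; [| |exact h]; auto; fail
                   | intro h; eapply cr; [| |apply ts; exact h]; auto; fail
                   | apply z1'; auto; fail | apply z2'; auto; fail ]. }
    assert (V2 : (t (f z) (f x2) /\ ~ t (f z) (f y2)) \/ (t (f z) (f y2) /\ ~ t (f z) (f x2))).
    { destruct (classic (t (f z) (f x2))) as [A1|A1]; destruct (classic (t (f z) (f y2))) as [B1|B1].
      - exfalso. apply F2. apply (c1 _ (f z)); auto.
      - left; auto.
      - right; auto.
      - exfalso. apply (BV x2 y2 x1 y1 z); auto.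
        all: first [ intro h; eapply cr; [| |exact h]; auto; fail
                   | intro h; eapply cr; [| |apply ts; exact h]; auto; fail
                   | apply z1'; auto; fail | apply z2'; auto; fail ]. }
    destruct V1 as [[A1 B1]|[A1 B1]]; destruct V2 as [[A2 B2]|[A2 B2]].
    + apply (MAIN x1 y1 x2 y2); auto.
    + apply (MAIN x1 y1 y2 x2); auto.
    + apply (MAIN y1 x1 x2 y2); auto.
    + apply (MAIN y1 x1 y2 x2); auto.
  -
    intros w1 w2 H1 H2. apply NNPP. intro Ha.
    destruct (nocov _ _ (b2 (f w1)) (b2 (f w2))) as [Z [Z1 Z2]].
    destruct (fsurj Z) as [z Hz]. subst Z.
    apply (N w1 w2 z).
    + intro h. apply H1. exists w2. split; auto.
    + intro h. apply H2. exists z. split; auto.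
    + intro h. apply H1. exists z. split; auto.
    + intro h; apply Ha; auto.
    + intro h; apply Z2; auto.
    + intro h; apply Z1; auto.
Qed.

Theorem lemma3p12
  (T : Type) (op : (T -> Prop) -> Prop)
  (G : Type) (mul : G -> G -> G) (inv : G -> G) (one : G)
  (act : G -> T -> T)
  (a0 : T -> T -> Prop)
  (hT : compactum op)
  (hG : is_group mul inv one)
  (hact : is_action mul one op act)
  (h3 : three_discontinuous op act)
  (h2 : two_cocompact op act)
  (ha0 : entourage op a0)
  (hlink : linked a0 a0) :
  let A := fun e => exists g, e = ent_act inv act g a0 in
  (forall (B : (T -> T -> Prop) -> Prop) (d : nat),
     (forall b, B b -> A b) ->
     ~ finite_set B ->
     1 <= d ->
     forall p : T, acc_point op (nbhd A B d) p <-> acc_point op B p) /\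
  (forall (b c : nat -> (T -> T -> Prop)) (p : T),
     (forall n, A (b n)) -> (forall n, A (c n)) ->
     (exists D, forall n, within A D (b n) (c n)) ->
     (conv_to op b p <-> conv_to op c p)).
Proof.
  intro A.
  destruct hT as [htop [hcomp [hhaus [x0 [y0 [z0 [Hxy [Hyz Hxz]]]]]]]].
  destruct hG as [gassoc [gl [gr [gvl gvr]]]].
  destruct hact as [act1 [actm actc]].
  destruct ha0 as [a0sym [W0 [W0op [W0sym [W0d W0a]]]]].
  assert (invinv : forall g, inv (inv g) = g).
  { intro g. rewrite <- (gr (inv (inv g))). rewrite <- (gvl g). rewrite gassoc.
    rewrite gvl. apply gl. }
  assert (actK : forall g x, act (inv g) (act g x) = x).
  { intros g x. rewrite <- actm, gvl. apply act1. }
  assert (actK' : forall g x, act g (act (inv g) x) = x).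
  { intros g x. rewrite <- actm, gvr. apply act1. }
  assert (D : forall u : T -> T -> Prop,
    (exists V, prod_open op op V /\ (forall x, V (x, x)) /\ forall x y, V (x, y) -> u x y) ->
    finite_set (fun e => A e /\ linked u e)).
  { intros u [V [HV [Vd Vu]]].
    destruct (halve op htop hcomp hhaus (fun p => V p /\ W0 p)) as [W4 [W4o [W4r [W4s W4c]]]].
    { apply po_inter; auto. } { intro; split; auto. }
    destruct (halve op htop hcomp hhaus W4) as [W2 [W2o [W2r [W2s W2c]]]]; auto.
    destruct (halve op htop hcomp hhaus W2) as [W1 [W1o [W1r [W1s W1c]]]]; auto.
    set (t := fun x y => W1 (x, y)).
    set (K := fun p : T * T * T => ~ t (fst (fst p)) (snd (fst p)) /\ ~ t (snd (fst p)) (snd p) /\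
                                   ~ t (fst (fst p)) (snd p)).
    assert (Kc : compact_set (prod_open (prod_open op op) op) K).
    { apply closed_compact.
      - apply prod_compact; auto. apply po_top; auto. apply prod_compact; auto.
      - intros [[x y] z] HK. simpl in HK.
        destruct (classic (t x y)) as [H1|H1]; [|destruct (classic (t y z)) as [H2|H2];
          [|destruct (classic (t x z)) as [H3|H3]; [|exfalso; apply HK; unfold K; simpl; auto]]].
        + destruct (W1o (x, y) H1) as [a [b [Ha [Hb [ax [bx Hab]]]]]].
          exists (fun q => (fun r => a (fst r) /\ b (snd r)) (fst q) /\ (fun _ => True) (snd q)).
          split; [exact (po_box (prod_open op op) op (fun r => a (fst r) /\ b (snd r)) (fun _ => True)
                   (po_box op op a b Ha Hb) (op_full op htop))|].
          split; [simpl; auto|]. intros [[x' y'] z'] [[H4 H5] _] [HK' _]. apply HK'. apply Hab; auto.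
        + destruct (W1o (y, z) H2) as [a [b [Ha [Hb [ax [bx Hab]]]]]].
          exists (fun q => (fun r => True /\ a (snd r)) (fst q) /\ b (snd q)).
          split; [exact (po_box (prod_open op op) op (fun r => True /\ a (snd r)) b
                   (po_box op op (fun _ => True) a (op_full op htop) Ha) Hb)|].
          split; [simpl; auto|]. intros [[x' y'] z'] [[_ H4] H5] [_ [HK' _]]. apply HK'. apply Hab; auto.
        + destruct (W1o (x, z) H3) as [a [b [Ha [Hb [ax [bx Hab]]]]]].
          exists (fun q => (fun r => a (fst r) /\ True) (fst q) /\ b (snd q)).
          split; [exact (po_box (prod_open op op) op (fun r => a (fst r) /\ True) b
                   (po_box op op a (fun _ => True) Ha (op_full op htop)) Hb)|].
          split; [simpl; auto|]. intros [[x' y'] z'] [[H4 _] H5] [_ [_ HK']]. apply HK'. apply Hab; auto. }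
    destruct (h3 K Kc) as [lh Hlh].
    { intros x y z [H1 [H2 H3]]. simpl in *.
      split; [intro; subst; apply H1, W1r|]. split; intro; subst; [apply H2|apply H3]; apply W1r. }
    apply (fin_sub _ (fun e => exists h, In h lh /\ e = ent_act inv act (inv h) a0));
      [apply fin_map; apply fin_list|].
    intros e [[g ->] Hl].
    destruct (classic (In (inv g) lh)) as [Hin|Hin].
    { exists (inv g). rewrite invinv. auto. }
    exfalso. apply Hl.
    destruct (claimC T (act (inv g)) t (fun x y => W2 (x, y)) (fun x y => W4 (x, y)) a0 u)
      as [s [Hs1 Hs2]].
    - intro y. exists (act g y). apply actK.
    - unfold t; auto.
    - auto.
    - auto.
    - unfold t; auto.
    - auto.
    - auto.
    - intros x y z; apply W1c.
    - intros x y z; apply W2c.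
    - intros x y z H1 H2. apply W0a. apply (W4c _ _ _ H1 H2).
    - intros x y H. apply Vu. apply (W4c x y y H (W4r y)).
    - exact hlink.
    - intros x y z n1 n2 n3 n4 n5 n6. apply Hin. apply (Hlh (inv g)).
      exists x, y, z. split; unfold K; simpl; auto.
    - exists s, (fun x => ~ s x). split; [intro x; apply classic|]. split; auto. }

  assert (linked_sym : forall e1 e2 : T -> T -> Prop, linked e1 e2 -> linked e2 e1).
  { intros e1 e2 H [u' [v' [Hc [H1 H2]]]]. apply H. exists v', u'.
    split; [intro x; destruct (Hc x); auto|]. split; auto. }
  assert (Aent : forall e, A e -> (forall x, e x x) /\ linked e e /\
      exists V, prod_open op op V /\ (forall x, V (x, x)) /\ forall x y, V (x, y) -> e x y).
  { intros e [g ->]. split; [intro x; apply W0a, W0d|]. split.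
    - intros [u' [v' [Hc [H1 H2]]]]. apply hlink.
      exists (fun x => u' (act g x)), (fun x => v' (act g x)). split; [intro; apply Hc|].
      split; intros x y Hx Hy; [specialize (H1 _ _ Hx Hy)|specialize (H2 _ _ Hx Hy)];
      unfold ent_act in *; rewrite !actK in *; auto.
    - exists (fun p => W0 (act (inv g) (fst p), act (inv g) (snd p))). split; [|split].
      + intros p Hp. destruct (W0op _ Hp) as [a [b [Ha [Hb [ax [bx Hab]]]]]].
        exists (fun x => a (act (inv g) x)), (fun x => b (act (inv g) x)).
        split; [apply actc; auto|]. split; [apply actc; auto|].
        split; [exact ax|]. split; [exact bx|]. intros x y Hx Hy. apply Hab; auto.
      + intro x. apply W0d.
      + intros x y H. apply W0a. exact H. }
  assert (LF1 : forall b, A b -> finite_set (fun c => A c /\ linked b c)).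
  { intros b Hb. apply D. apply Aent; auto. }
  assert (wrefl : forall d e, within A d e e).
  { intros [|d] e; simpl; auto. }
  assert (wsnoc : forall d a b c, within A d a b -> A b -> linked b c -> A c -> within A (S d) a c).
  { induction d as [|d IH]; intros a b c H Ab Hl Ac.
    - simpl in H. subst. simpl. right. exists c. auto.
    - destruct H as [->|[b' [Ab' [Hl' H]]]].
      + right. exists c. split; [exact Ac|]. split; [exact Hl| apply wrefl].
      + right. exists b'. split; [exact Ab'|]. split; [exact Hl'|]. eapply IH; eauto. }
  assert (wsym : forall d a c, A a -> A c -> within A d a c -> within A d c a).
  { induction d as [|d IH]; intros a c Aa Ac H.
    - simpl in *; auto.
    - destruct H as [->|[b [Ab [Hl H]]]]; [left; auto|].
      apply (wsnoc d c b a); auto. }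
  assert (LFd : forall d e, finite_set (fun b => A b /\ within A d b e)).
  { induction d as [|d IH]; intros e.
    - exists (e :: nil). intros b [_ H]. simpl in H. left; auto.
    - destruct (IH e) as [l Hl].
      apply (fin_sub _ (fun b => b = e \/ exists b', In b' l /\ (A b' /\ A b /\ linked b' b))).
      + apply fin_union. { exists (e :: nil). intros b ->. left; auto. }
        apply fin_big. intros b' _. destruct (classic (A b')) as [Hb'|Hb'].
        * apply (fin_sub _ _ (LF1 b' Hb')). intros x [_ [? ?]]; auto.
        * exists nil. intros x [H _]. contradiction.
      + intros b [Ab [->|[b' [Ab' [Hl' H]]]]]; [left; auto|].
        right. exists b'. split; [apply Hl; auto|]. auto. }
  assert (acc_mono : forall (B C : (T -> T -> Prop) -> Prop) p,
     (forall e, B e -> C e) -> acc_point op B p -> acc_point op C p).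
  { intros B C p H HB o Ho po Hf. apply (HB o Ho po).
    apply (fin_sub _ _ Hf). intros e [? ?]; auto. }
  assert (N1 : forall B p, (forall b, B b -> A b) -> acc_point op (nbhd A B 1) p -> acc_point op B p).
  { intros B p HBA Hacc o Ho po [L HL].
    destruct (regular op htop hcomp hhaus o p Ho po) as [n [m [Hn [Hm [np [Hnm Hom]]]]]].
    destruct (D (fun x y => (o x /\ o y) \/ (m x /\ m y))) as [Lu HLu].
    { exists (fun q => (o (fst q) /\ o (snd q)) \/ (m (fst q) /\ m (snd q))).
      split; [apply po_union; apply po_box; auto|]. split; auto.
      intro x. simpl. destruct (classic (o x)); [left|right]; auto. }
    apply (Hacc n Hn np).
    apply (fin_sub _ (fun c => exists b, In b (L ++ Lu) /\ (A b /\ (c = b \/ (A c /\ linked b c))))).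
    { apply fin_big. intros b _. destruct (classic (A b)) as [Hb|Hb].
      - apply (fin_sub _ (fun c => c = b \/ (A c /\ linked b c))).
        + apply fin_union; [exists (b :: nil); intros x ->; left; auto| apply LF1; auto].
        + intros x [_ H]; auto.
      - exists nil. intros x [H _]; contradiction. }
    intros c [[Ac [b [Bb Hw]]] Hsc].
    assert (Ab : A b) by auto.
    assert (Hbc : c = b \/ linked b c).
    { simpl in Hw. destruct Hw as [->|[b' [_ [Hl ->]]]]; auto. }
    exists b. split; [|split; auto; destruct Hbc; auto].
    apply in_or_app.
    destruct (classic (linked (fun x y => (o x /\ o y) \/ (m x /\ m y)) b)) as [Hl|Hl].
    { right. apply HLu. auto. }
    left. apply HL. split; auto.
    apply NNPP in Hl. destruct Hl as [s [v [Hc [Hs Hv]]]].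
    destruct (classic (exists x, s x /\ ~ m x)) as [[x [sx mx]]|Hx].
    - assert (so : forall y, s y -> o y).
      { intros y sy. destruct (Hs x y sx sy) as [[_ ?]|[? _]]; auto. contradiction. }
      intros y1 y2 H1 H2. apply Hv.
      + destruct (Hc y1); auto. exfalso; apply H1; auto.
      + destruct (Hc y2); auto. exfalso; apply H2; auto.
    - assert (sc : small c s).
      { intros y1 y2 H1 H2. apply Hsc; intro.
        - apply (Hnm y1); auto. apply NNPP; intro; apply Hx; eauto.
        - apply (Hnm y2); auto. apply NNPP; intro; apply Hx; eauto. }
      exfalso. destruct Hbc as [->|Hbc].
      + apply (proj1 (proj2 (Aent b Ab))). exists v, s. split; [intro x; destruct (Hc x); auto|]. auto.
      + apply Hbc. exists v, s. split; [intro x; destruct (Hc x); auto|]. auto. }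
  assert (GL : forall d B p, (forall b, B b -> A b) -> acc_point op (nbhd A B d) p -> acc_point op B p).
  { induction d as [|d IH]; intros B p HBA Hacc.
    - apply (acc_mono (nbhd A B 0) B p); [|exact Hacc]. intros c [_ [b [Bb Hw]]]. simpl in Hw. subst; auto.
    - apply N1; auto. apply IH.
      + intros c [Ac _]; auto.
      + apply (acc_mono (nbhd A B (S d)) _ p); [|exact Hacc]. intros c [Ac [b [Bb Hw]]].
        destruct Hw as [->|[b' [Ab' [Hl Hw]]]].
        * split; [exact Ac|]. exists c.
          split; [split; [exact Ac|]; exists c; split; [exact Bb| left; reflexivity] | apply wrefl].
        * split; [exact Ac|]. exists b'. split; [|exact Hw].
          split; [exact Ab'|]. exists b. split; [exact Bb|].
          right. exists b'. split; [exact Ab'|]. split; [exact Hl| reflexivity]. }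

  assert (AccEx : forall S, (forall e, S e -> A e) -> ~ finite_set S -> exists q, acc_point op S q).
  { intros S HSA HSinf. apply NNPP; intro Hno.
    assert (Hq : forall q, exists o, op o /\ o q /\ finite_set (fun e => S e /\ small e (fun x => ~ o x))).
    { intro q. apply NNPP; intro H. apply Hno. exists q. intros o Ho oq Hf. apply H. eauto. }
    set (F := fun U => op U /\ exists o m, op o /\ op m /\ (forall x, U x -> m x -> False) /\
                (forall x, ~ o x -> m x) /\ finite_set (fun e => S e /\ small e (fun x => ~ o x))).
    destruct (hcomp F) as [l [Hl Hcov]].
    - intros U [? _]; auto.
    - intros q _. destruct (Hq q) as [o [Ho [oq Hf]]].
      destruct (regular op htop hcomp hhaus o q Ho oq) as [n [m [Hn [Hm [nq [Hnm Hom]]]]]].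
      exists n. split; [|exact nq]. split; [exact Hn|]. exists o, m. auto.
    - assert (Gl : forall l', (forall U, In U l' -> F U) -> exists (V : T * T -> Prop) (lo : list (T -> Prop)),
          prod_open op op V /\ (forall x, V (x, x)) /\
          (forall o, In o lo -> finite_set (fun e => S e /\ small e (fun x => ~ o x))) /\
          forall x, (exists U, In U l' /\ U x) -> exists o, In o lo /\ forall y, V (x, y) -> o y).
      { induction l' as [|U l' IH]; intros HF.
        - exists (fun _ => True), nil. split; [apply po_full; auto|]. split; [auto|].
          split; [intros o []|]. intros x [U [[] _]].
        - destruct IH as [V [lo [HV [Vd [Hlo Hc]]]]]. { intros; apply HF; right; auto. }
          destruct (HF U (or_introl eq_refl)) as [HU [o [m [Ho [Hm [HUm [Hom Hf]]]]]]].
          exists (fun p => V p /\ ((o (fst p) /\ o (snd p)) \/ (m (fst p) /\ m (snd p)))), (o :: lo).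
          split; [apply po_inter; auto; apply po_union; apply po_box; auto|].
          split; [intro x; split; auto; simpl; destruct (classic (o x)); [left|right]; auto|].
          split; [intros o' [<-|Hin]; auto|].
          intros x [U' [[<-|Hin] Ux]].
          + exists o. split; [left; auto|]. intros y [_ [[_ ?]|[mx _]]]; auto. exfalso; eauto.
          + destruct (Hc x) as [o' [Ho' Ho'']]; eauto. exists o'. split; [right; auto|].
            intros y [Vxy _]; auto. }
      destruct (Gl l Hl) as [V [lo [HV [Vd [Hlo Hc]]]]].
      destruct (D (fun x y => V (x, y))) as [Lu HLu]. { exists V. auto. }
      apply HSinf.
      apply (fin_sub _ (fun e => In e Lu \/ exists o, In o lo /\ (S e /\ small e (fun x => ~ o x)))).
      { apply fin_union; [apply fin_list|]. apply fin_big; auto. }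
      intros e Se. destruct (classic (linked (fun x y => V (x, y)) e)) as [Hl'|Hl'].
      + left. apply HLu. auto.
      + right. apply NNPP in Hl'. destruct Hl' as [s [v [Hcv [Hs Hv]]]].
        destruct (classic (exists x, s x)) as [[x sx]|Hx].
        * destruct (Hc x (Hcov x I)) as [o [Ho Hoy]]. exists o. split; auto. split; auto.
          intros y1 y2 H1 H2. apply Hv.
          -- destruct (Hcv y1) as [h|h]; auto. exfalso. apply H1. apply Hoy. apply Hs; auto.
          -- destruct (Hcv y2) as [h|h]; auto. exfalso. apply H2. apply Hoy. apply Hs; auto.
        * exfalso. apply (proj1 (proj2 (Aent e (HSA e Se)))). exists v, v.
          split; [|split; auto]. intro y. destruct (Hcv y); auto. exfalso; eauto. }
  assert (notconst : forall e p, A e -> (forall o, op o -> o p -> small e (fun x => ~ o x)) -> False).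
  { intros e p Ae H. destruct (Aent e Ae) as [er [el _]].
    apply el. exists (fun x => x <> p), (fun x => x = p). split; [intro x; destruct (classic (x = p)); auto|]. split.
    - intros x y Hx Hy.
      destruct (hhaus p x (fun h => Hx (eq_sym h))) as [U1 [V1 [HU1 [HV1 [U1p [V1x Hd1]]]]]].
      destruct (hhaus p y (fun h => Hy (eq_sym h))) as [U2 [V2 [HU2 [HV2 [U2p [V2y Hd2]]]]]].
      apply (H (fun z => U1 z /\ U2 z)); [apply op_inter; auto| split; auto| |].
      + intros [h _]. eauto.
      + intros [_ h]. eauto.
    - intros x y -> ->. apply er. }
  assert (P2 : forall b c p Dd, (forall n, A (b n)) -> (forall n, A (c n)) ->
      (forall n, within A Dd (b n) (c n)) -> conv_to op b p -> conv_to op c p).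
  { intros b c p Dd Hb Hc HD Hconv o Ho po. apply NNPP; intro Hn.
    set (I := fun n => ~ small (c n) (fun x => ~ o x)).
    assert (HI : forall N, exists n, N <= n /\ I n).
    { intro N. apply NNPP; intro H. apply Hn. exists N. intros n Hnn.
      apply NNPP; intro H'. apply H. exists n. split; auto. }
    set (S := fun e => exists n, I n /\ e = c n).
    destruct (classic (finite_set S)) as [[l Hl]|Hinf].
    - destruct (pigeon I c l HI) as [e [He Hall]].
      { intros n In'. apply Hl. exists n; auto. }
      destruct (LFd Dd e) as [lb Hlb].
      destruct (pigeon (fun n => I n /\ c n = e) b lb) as [b' [Hb' Hall']].
      { intro N. destruct (Hall N) as [n [? [? ?]]]. exists n. auto. }
      { intros n [In' Hce]. apply Hlb. split; auto. rewrite <- Hce. auto. }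
      destruct (Hall' 0) as [n0 [_ [_ Hbn0]]].
      apply (notconst b' p); [rewrite <- Hbn0; auto|].
      intros o' Ho' po'. destruct (Hconv o' Ho' po') as [N HN].
      destruct (Hall' N) as [n [Hn' [_ Hbn]]]. rewrite <- Hbn. apply HN; auto.
    - destruct (AccEx S) as [q Hq]; auto.
      { intros e [n [_ ->]]; auto. }
      set (B' := fun e => exists n, I n /\ e = b n).
      assert (HqB : acc_point op B' q).
      { apply (GL Dd); [intros e [n [_ ->]]; auto|].
        apply (acc_mono S); auto. intros e [n [In' ->]]. split; auto.
        exists (b n). split; auto. exists n; auto. }
      assert (Hqp : q = p).
      { apply NNPP; intro Hqp.
        destruct (hhaus p q (fun h => Hqp (eq_sym h))) as [U [V [HU [HV [Up [Vq Hd]]]]]].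
        destruct (Hconv U HU Up) as [N HN].
        apply (HqB V HV Vq).
        apply (fin_sub _ (fun e => exists k, In k (seq 0 N) /\ e = b k)).
        { apply fin_map. apply fin_list. }
        intros e [[n [In' ->]] Hsm].
        exists n. split; auto. apply in_seq. split; [apply PeanoNat.Nat.le_0_l|].
        simpl. apply NNPP; intro Hlt.
        assert (Hnn : N <= n) by (apply PeanoNat.Nat.nlt_ge; auto).
        apply (proj1 (proj2 (Aent (b n) (Hb n)))).
        exists (fun x => ~ U x), (fun x => ~ V x). split; [|split; auto].
        intro x. destruct (classic (U x)); [right; intro; eauto|left; auto]. }
      subst q. apply (Hq o Ho po). exists nil.
      intros e [[n [In' ->]] Hsm]. exfalso. apply In'. exact Hsm. }
  split.
  - intros B d HBA _ _ p. split.
    + apply GL; auto.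
    + apply acc_mono. intros b Bb. split; auto. exists b. split; auto.
  - intros b c p Hb Hc [Dd HD]. split.
    + apply (P2 b c p Dd); auto.
    + apply (P2 c b p Dd); auto.
Qed.
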